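(* For every subgroup $H\le G_{d,k}$, the multicomplex $\widetilde{\mathfrak X}_{d,k}(H)$ is link-connected.
   Context: Fix $d,k\ge1$, $[\![d]\!]=\{0,\dots,d\}$. $G_{d,k}=\langle\alpha_0,\dots,\alpha_d\mid\alpha_i^k=e\rangle$; for $J\subseteq[\![d]\!]$, $K_J=\langle\alpha_j:j\in J\rangle$, $\widehat J=[\![d]\!]\setminus J$, $\widehat i=\widehat{\{i\}}$. For $H\le G_{d,k}$, $g\in G_{d,k}$, $J\subseteq[\![d]\!]$ write $[K_{\widehat J}g]_H=\{K_{\widehat J}gh:h\in H\}$. The multicomplex $\widetilde{\mathfrak X}_{d,k}(H)$: its multicells of dimension $|J|-1$ are the classes $[K_{\widehat J}g]_H$ (for $J=[\![d]\!]$ these are the $[g]_H$, identified with left cosets $gH$); $[K_{\widehat J}g]_H$ lies over the cell $\Phi([K_{\widehat J}g]_H)=\{[K_{\widehat i}g]_H:i\in J\}$ (well defined), the underlying simplicial complex $\mathfrak X_{d,k}(H)$ consists of all such cells, and the multiplicity of a cell $\sigma$ is $|\Phi^{-1}(\sigma)|$; containment is $[K_{\widehat I}g]_H\preceq[K_{\widehat J}g]_H$ for $I\subseteq J$ (so the boundary multicells of $[K_{\widehat J}g]_H$ are the $[K_{\widehat{J\setminus\{l\}}}g]_H$, $l\in J$). A multicomplex is link-connected if for every multicell $\mathfrak a$ of dimension $j\le d-2$ (including the empty multicell, $j=-1$) the multigraph whose vertices are the $(j+1)$-multicells containing $\mathfrak a$ and whose edges are the $(j+2)$-multicells containing $\mathfrak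 a$ (each joining the two $(j+1)$-multicells containing $\mathfrak a$ that it contains) is connected. *)

(* Defs.v *)
From mathcomp Require Import all_boot.
From Stdlib Require Import Relation_Operators.
Set Implicit Arguments. Unset Strict Implicit. Unset Printing Implicit Defensive.

(* The group G_{d,k} = < alpha_0..alpha_d | alpha_i^k = e > (free product of
   d+1 copies of Z/k), modelled by its normal forms: reduced words, i.e.
   sequences of letters (i, a) standing for alpha_i^a with 0 < a < k and
   consecutive letters having distinct indices.  Indices live in 'I_d.+1,
   i.e. [[d]] = {0,...,d}. *)

Definition letter (d : nat) := ('I_d.+1 * nat)%type.
Definition word (d : nat) := seq (letter d).

Fixpoint adjdistinct d (w : word d) : bool :=
  match w with
  | x :: ((y :: _) as w') => (x.1 != y.1) && adjdistinct w'
  | _ => true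
  end.

Definition reduced d k (w : word d) : bool :=
  all (fun x => (0 < x.2 < k)%N) w && adjdistinct w.

Definition push d k (x : letter d) (w : word d) : word d :=
  let a := x.2 %% k in
  if a == 0 then w else
  match w with
  | y :: w' => if x.1 == y.1 then
                 (if (a + y.2) %% k == 0 then w' else (x.1, (a + y.2) %% k) :: w')
               else (x.1, a) :: w
  | [::] => [:: (x.1, a)]
  end.

Definition gmul d k (u v : word d) : word d := foldr (@push d k) v u.
Definition gone d : word d := [::].
Definition ginv d k (u : word d) : word d := rev (map (fun x => (x.1, k - x.2)) u).
Definition alpha d k (i : 'I_d.+1) : word d := push k (i, 1) [::].

(* K_J = subgroup generated by the alpha_j, j in J.  Since alpha_j^{-1} =
   alpha_j^{k-1}, it consists of the finite products of generators. *)
Definition inK d k (J : {set 'I_d.+1}) (g : word d) : Prop :=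
  exists s : seq 'I_d.+1, all (fun i => i \in J) s /\
    g = foldr (fun i acc => gmul k (alpha k i) acc) (gone d) s.

Definition is_subgroup d k (H : word d -> Prop) : Prop :=
  (forall g, H g -> reduced k g) /\ H (gone d) /\
  (forall g h, H g -> H h -> H (gmul k g h)) /\
  (forall g, H g -> H (ginv k g)).

Definition hat d (J : {set 'I_d.+1}) : {set 'I_d.+1} := ~: J.

(* [K_{hat J} g]_H = [K_{hat J} g']_H : the double cosets K_{hat J} g H agree *)
Definition samecls d k (H : word d -> Prop) (J : {set 'I_d.+1}) (g g' : word d) : Prop :=
  exists x h, inK k (hat J) x /\ H h /\ g' = gmul k (gmul k x g) h.

(* A multicell of dimension |J|-1 is represented by a pair (J, g) with g
   reduced; it stands for the class [K_{hat J} g]_H. *)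
Definition mcell d := ({set 'I_d.+1} * word d)%type.

Definition valid d k (c : mcell d) : Prop := reduced k c.2.

Definition same_mcell d k (H : word d -> Prop) (c c' : mcell d) : Prop :=
  c.1 = c'.1 /\ samecls k H c.1 c.2 c'.2.

(* containment: [K_{hat I} g]_H <= [K_{hat J} g]_H for I \subset J, for a
   common representative g *)
Definition mle d k (H : word d -> Prop) (c c' : mcell d) : Prop :=
  c.1 \subset c'.1 /\
  exists g, reduced k g /\ samecls k H c.1 c.2 g /\ samecls k H c'.1 c'.2 g.

(* Link graph of a multicell a = (J,g): vertices are the (j+1)-multicells
   containing a, edges the (j+2)-multicells containing a; an edge joins the
   vertices it contains.  [link_step] relates two vertices which are the same
   multicell or are joined by an edge. *)
Definition link_vertex d k (H : word d -> Prop) (a v : mcell d) : Prop :=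
  valid k v /\ #|v.1| = #|a.1|.+1 /\ mle k H a v.

Definition link_step d k (H : word d -> Prop) (a : mcell d) (v w : mcell d) : Prop :=
  link_vertex k H a v /\ link_vertex k H a w /\
  (same_mcell k H v w \/
   exists e : mcell d, valid k e /\ #|e.1| = #|a.1|.+2 /\ mle k H a e /\
     mle k H v e /\ mle k H w e).

(* link-connected: for every multicell a of dimension j <= d-2 (i.e.
   |J| <= d-1, including the empty multicell J = set0), the link graph is
   connected. *)
Definition link_connected d k (H : word d -> Prop) : Prop :=
  forall a : mcell d, valid k a -> (#|a.1|.+1 <= d)%N ->
  forall v w, link_vertex k H a v -> link_vertex k H a w ->
    @clos_refl_trans _ (link_step k H a) v w.

(* Main.v *)
Require Import Defs.
From mathcomp Require Import all_boot.
From Stdlib Require Import Relation_Operators.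
From mathcomp Require Import zify.
Set Implicit Arguments. Unset Strict Implicit. Unset Printing Implicit Defensive.

Definition hexp d (i : 'I_d.+1) (z : word d) : nat :=
  if z is y :: _ then (if y.1 == i then y.2 else 0) else 0.
Definition htail d (i : 'I_d.+1) (z : word d) : word d :=
  if z is y :: z' then (if y.1 == i then z' else z) else z.
Definition mk d (i : 'I_d.+1) (c : nat) (t : word d) : word d :=
  if c == 0 then t else (i, c) :: t.
Definition noi d (i : 'I_d.+1) (t : word d) : bool :=
  if t is y :: _ then y.1 != i else true.

Lemma reduced_cons d k (y : letter d) z :
  reduced k (y :: z) = [&& 0 < y.2 < k, reduced k z & noi y.1 z].
Proof.
rewrite /reduced /=; case: z => [|y' z] /=; first by rewrite !andbT.
rewrite [y'.1 == _]eq_sym.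
by case: (0 < y.2 < k); case: (0 < y'.2 < k); case: (all _ _); case: (y.1 != y'.1);
  case: (match z with [::] => true | _ => _ end).
Qed.

Lemma pushE d k (i : 'I_d.+1) a (z : word d) : reduced k z ->
  push k (i, a) z = mk i ((a + hexp i z) %% k) (htail i z).
Proof.
case: z => [|y z] /=; first by rewrite addn0 /push /mk /=.
rewrite reduced_cons => /and3P [/andP [y0 yk] _ _].
rewrite /push /mk /=.
have [e|ne] := eqVneq i y.1.
  subst i.
  case: eqP => [a0|a0].
    rewrite -modnDml a0 add0n modn_small // gtn_eqF //.
    by case: y y0 yk.
  by rewrite modnDml.
by rewrite addn0.
Qed.

Lemma hexp_mk d (i : 'I_d.+1) c t : noi i t -> hexp i (mk i c t) = c.
Proof.
rewrite /mk; case: eqP => [->|_] /=; last by rewrite eqxx.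
by case: t => [|y t] //= /negbTE ->.
Qed.

Lemma htail_mk d (i : 'I_d.+1) c t : noi i t -> htail i (mk i c t) = t.
Proof.
rewrite /mk; case: eqP => [_|_] /=; last by rewrite eqxx.
by case: t => [|y t] //= /negbTE ->.
Qed.

Lemma reduced_mk d k (i : 'I_d.+1) c t :
  reduced k t -> noi i t -> c < k -> reduced k (mk i c t).
Proof.
rewrite /mk; case: eqP => [_|c0] //= rt nt ck.
by rewrite reduced_cons /= rt nt ck !andbT lt0n; apply/eqP.
Qed.

Lemma htail_red d k (i : 'I_d.+1) z :
  reduced k z -> reduced k (htail i z) && noi i (htail i z).
Proof.
case: z => [|y z] //= rz; case: eqP => [e|ne] /=.
  by move: rz; rewrite reduced_cons e => /and3P [_ -> ->].
by rewrite rz; apply/eqP.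
Qed.

Lemma reduced_push d k (l : letter d) z : 0 < k -> reduced k z -> reduced k (push k l z).
Proof.
case: l => i a hk rz; rewrite pushE //.
have /andP [r1 r2] := htail_red i rz.
by apply: reduced_mk => //; rewrite ltn_mod.
Qed.

Lemma push_mod d k (i : 'I_d.+1) a z : push k (i, a %% k) z = push k (i, a) z.
Proof. by rewrite /push /= modn_mod. Qed.

Lemma push0 d k (i : 'I_d.+1) a z : a %% k = 0 -> push k (i, a) z = z.
Proof. by rewrite /push /= => ->. Qed.

Lemma push_push d k (i : 'I_d.+1) a b z : 0 < k -> reduced k z ->
  push k (i, a) (push k (i, b) z) = push k (i, a + b) z.
Proof.
move=> hk rz.
have rp := reduced_push (i, b) hk rz.
rewrite (pushE _ _ rp) [push k (i, b) z]pushE // [push k (i, a + b) z]pushE //.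
have /andP [_ nt] := htail_red i rz.
by rewrite hexp_mk // htail_mk // modnDmr addnA.
Qed.

Lemma gmul_mk d k (i : 'I_d.+1) c t g : gmul k (mk i c t) g = push k (i, c) (gmul k t g).
Proof.
rewrite /mk; case: eqP => [->|_] //=.
by rewrite push0 // mod0n.
Qed.

Lemma gmul_split d k (i : 'I_d.+1) x g :
  gmul k x g = push k (i, hexp i x) (gmul k (htail i x) g).
Proof.
case: x => [|y x] /=; first by rewrite push0 ?mod0n.
case: eqP => [<-|_]; first by case: y.
by rewrite push0 ?mod0n.
Qed.

Lemma reduced_gmul d k (u v : word d) : 0 < k -> reduced k v -> reduced k (gmul k u v).
Proof. move=> hk rv; elim: u => [|l u IH] //=; exact: reduced_push. Qed.

Lemma gmul_push d k (i : 'I_d.+1) a x g : 0 < k -> reduced k g -> reduced k x ->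
  gmul k (push k (i, a) x) g = push k (i, a) (gmul k x g).
Proof.
move=> hk rg rx.
rewrite pushE // gmul_mk push_mod (@gmul_split _ k i x g) push_push //.
exact: reduced_gmul.
Qed.

Lemma gmul_nil d k (z : word d) : reduced k z -> gmul k z [::] = z.
Proof.
elim: z => [|y z IH] //= rz.
move: (rz); rewrite reduced_cons => /and3P [/andP [y0 yk] rz' nz].
rewrite IH // /push modn_small // gtn_eqF //.
case: z {IH rz rz'} nz => [|y' z] /=; first by case: y y0 yk.
by rewrite eq_sym => /negbTE ->; case: y y0 yk.
Qed.

Lemma gmul_alpha d k (i : 'I_d.+1) y : gmul k (alpha k i) y = push k (i, 1) y.
Proof.
rewrite /alpha {1}/push /=; case: eqP => [h|h] /=; first by rewrite push0.
by rewrite push_mod.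
Qed.

Definition Xs d k (s : seq 'I_d.+1) : word d :=
  foldr (fun i acc => gmul k (alpha k i) acc) (gone d) s.

Lemma reduced_Xs d k s : 0 < k -> reduced k (@Xs d k s).
Proof. move=> hk; elim: s => [|i s IH] //=; exact: reduced_gmul. Qed.

Lemma gmul_Xs_cons d k (i : 'I_d.+1) s g : 0 < k -> reduced k g ->
  gmul k (Xs k (i :: s)) g = gmul k (alpha k i) (gmul k (Xs k s) g).
Proof.
move=> hk rg; rewrite /= !gmul_alpha gmul_push //; exact: reduced_Xs.
Qed.

Lemma samecls_refl d k (H : word d -> Prop) J g :
  H [::] -> reduced k g -> samecls k H J g g.
Proof.
move=> H0 rg; exists [::], [::]; split; first by exists [::].
by rewrite /= gmul_nil.
Qed.

Lemma lv_of d k (H : word d -> Prop) (J : {set 'I_d.+1}) g0 p g :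
  H [::] -> p \notin J -> reduced k g -> samecls k H J g0 g ->
  link_vertex k H (J, g0) (p |: J, g).
Proof.
move=> H0 pJ rg sg; split => //; split; first by rewrite cardsU1 pJ.
split; first exact: subsetUr.
by exists g; split => //; split => //; apply: samecls_refl.
Qed.

Lemma edge d k (H : word d -> Prop) (J : {set 'I_d.+1}) g0 p q g g' :
  H [::] -> p \notin J -> q \notin J -> p != q -> reduced k g' ->
  link_vertex k H (J, g0) (p |: J, g) ->
  samecls k H (p |: J) g g' -> samecls k H J g0 g' ->
  link_step k H (J, g0) (p |: J, g) (q |: J, g') /\
  link_step k H (J, g0) (q |: J, g') (p |: J, g).
Proof.
move=> H0 pJ qJ pq rg' lv s1 s2.
have lw := lv_of H0 qJ rg' s2.
have pqJ : p \notin q |: J by rewrite in_setU1 negb_or pq.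
have ex : exists e : mcell d, valid k e /\ #|e.1| = #|(J, g0).1|.+2 /\
   mle k H (J, g0) e /\ mle k H (p |: J, g) e /\ mle k H (q |: J, g') e.
  exists (p |: (q |: J), g'); split => //=.
  split; first by rewrite cardsU1 pqJ cardsU1 qJ.
  have R := samecls_refl (p |: (q |: J)) H0 rg'.
  split; first by split; [apply/subsetP => x xJ; rewrite !in_setU1 xJ !orbT |
     exists g'; do !split].
  split; first by split; [apply/subsetP => x; rewrite !in_setU1 => /orP [->|->]; rewrite ?orbT | exists g'; do !split].
  split; first by apply/subsetP => x; rewrite !in_setU1 => /orP [->|->]; rewrite ?orbT.
  exists g'; do !split => //; exact: samecls_refl.
split; (split; [|split]) => //; right => //.
case: ex => e [? [? [? [? ?]]]]; by exists e.
Qed.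

Lemma vert_shape d (J V : {set 'I_d.+1}) :
  J \subset V -> #|V| = #|J|.+1 -> exists2 p, p \notin J & V = p |: J.
Proof.
move=> JV cV.
have : 0 < #|V :\: J|.
  by rewrite cardsD (setIidPr JV) cV subSn // subnn.
case/card_gt0P => p; rewrite in_setD => /andP [pJ pV].
exists p => //; apply/eqP; rewrite eq_sym eqEcard cV cardsU1 pJ leqnn andbT.
by apply/subsetP => x; rewrite in_setU1 => /orP [/eqP ->|/(subsetP JV)].
Qed.

Lemma other d (J : {set 'I_d.+1}) (p : 'I_d.+1) :
  #|J|.+1 <= d -> exists q, q \notin J /\ q != p.
Proof.
move=> hJ.
have h1 := cardsC J; rewrite card_ord in h1.
have h2 := cardsD1 p (~: J).
have : 0 < #|~: J :\ p|.
  have h3 : 1 < #|~: J| by rewrite -(ltn_add2l #|J|) h1 addn1 ltnS.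
  rewrite h2 in h3; case: (p \in ~: J) h3 => /= h3.
    by rewrite add1n ltnS in h3.
  by rewrite add0n in h3; apply: ltnW.
case/card_gt0P => q; rewrite !inE => /andP [qp qJ].
by exists q; split.
Qed.

Definition conn2 d k (H : word d -> Prop) (a v w : mcell d) : Prop :=
  @clos_refl_trans _ (link_step k H a) v w /\ @clos_refl_trans _ (link_step k H a) w v.

Lemma conn2_trans d k (H : word d -> Prop) a u v w :
  conn2 k H a u v -> conn2 k H a v w -> conn2 k H a u w.
Proof.
move=> [h1 h2] [h3 h4]; split; [exact: rt_trans h1 h3 | exact: rt_trans h4 h2].
Qed.

Lemma conn2_sym d k (H : word d -> Prop) a u v :
  conn2 k H a u v -> conn2 k H a v u.
Proof. by move=> [h1 h2]; split. Qed.

Lemma edge2 d k (H : word d -> Prop) (J : {set 'I_d.+1}) g0 p q g g' :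
  H [::] -> p \notin J -> q \notin J -> p != q -> reduced k g' ->
  link_vertex k H (J, g0) (p |: J, g) ->
  samecls k H (p |: J) g g' -> samecls k H J g0 g' ->
  conn2 k H (J, g0) (p |: J, g) (q |: J, g').
Proof.
move=> H0 pJ qJ pq rg' lv s1 s2.
have [e1 e2] := edge H0 pJ qJ pq rg' lv s1 s2.
split; exact: rt_step.
Qed.

Lemma m1 d k (H : word d -> Prop) (J : {set 'I_d.+1}) g0 p q z :
  H [::] -> p \notin J -> q \notin J -> reduced k z -> samecls k H J g0 z ->
  conn2 k H (J, g0) (p |: J, z) (q |: J, z).
Proof.
move=> H0 pJ qJ rz sz.
have [/eqP <-|pq] := boolP (p == q); first by split; apply: rt_refl.
apply: edge2 => //; first exact: lv_of.
exact: samecls_refl.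
Qed.

Lemma chain d k (H : word d -> Prop) (J : {set 'I_d.+1}) g0 p0 :
  0 < k -> H [::] -> reduced k g0 -> p0 \notin J -> #|J|.+1 <= d ->
  forall s, all (fun i => i \in hat J) s -> forall p, p \notin J ->
  conn2 k H (J, g0) (p |: J, gmul k (Xs k s) g0) (p0 |: J, g0).
Proof.
move=> hk H0 rg0 p0J hJ; elim => [|i s IH] /= => [_|/andP [iJ sJ]] p pJ.
  apply: m1 => //; exact: samecls_refl.
rewrite /hat in_setC in iJ.
have rz : reduced k (gmul k (Xs k s) g0) by exact: reduced_gmul.
have inKs : forall t, all (fun i => i \in hat J) t ->
   samecls k H J g0 (gmul k (Xs k t) g0).
  move=> t tJ; exists (Xs k t), [::]; split; first by exists t.
  by split => //; rewrite gmul_nil //; apply: reduced_gmul.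
have rz2 : reduced k (gmul k (alpha k i) (gmul k (Xs k s) g0)) by exact: reduced_gmul.
have sz2 : samecls k H J g0 (gmul k (alpha k i) (gmul k (Xs k s) g0)).
  by rewrite -gmul_Xs_cons //; apply: inKs => /=; rewrite /hat in_setC iJ.
have -> : gmul k (gmul k (alpha k i) (Xs k s)) g0 =
    gmul k (alpha k i) (gmul k (Xs k s) g0) by rewrite -gmul_Xs_cons.
apply: conn2_trans (m1 H0 pJ iJ rz2 sz2) _.
have [p' [p'J p'i]] := other i hJ.
apply: conn2_trans (IH sJ p' p'J).
apply: conn2_sym; apply: edge2 => //.
- by apply: lv_of => //; apply: inKs.
- exists (Xs k [:: i]), [::]; split.
    by exists [:: i]; rewrite /= /hat !inE negb_or iJ eq_sym p'i.
  split => //; rewrite gmul_nil; last exact: reduced_gmul.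
  by rewrite gmul_Xs_cons // gmul_alpha.
Qed.

Lemma to_base d k (H : word d -> Prop) (J : {set 'I_d.+1}) g0 p0 v :
  0 < k -> H [::] -> reduced k g0 -> p0 \notin J -> #|J|.+1 <= d ->
  link_vertex k H (J, g0) v -> conn2 k H (J, g0) v (p0 |: J, g0).
Proof.
move=> hk H0 rg0 p0J hJ lv.
move: (lv); case: v lv => V gv lv [rgv [cV [/= JV [g1 [rg1 [s1 s2]]]]]].
have [p pJ eV] := vert_shape JV cV; subst V.
have [q [qJ qp]] := other p hJ.
have c1 := edge2 H0 pJ qJ (_ : p != q) rg1 lv s2 s1.
apply: conn2_trans (c1 _) _; first by rewrite eq_sym.
have [q' [q'J q'q]] := other q hJ.
move: s1 => [x1 [h1 [[t [tJ ex]] [Hh1 e1]]]].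
have ex' : x1 = Xs k t by [].
rewrite ex' in e1.
have rz : reduced k (gmul k (Xs k t) g0) by exact: reduced_gmul.
have sz : samecls k H J g0 (gmul k (Xs k t) g0).
  exists (Xs k t), [::]; split; first by exists t.
  by split => //; rewrite gmul_nil.
have c2 : conn2 k H (J, g0) (q' |: J, gmul k (Xs k t) g0) (q |: J, g1).
  apply: edge2 => //; first exact: lv_of.
    exists [::], h1; split; first by exists [::].
    by split.
  by exists x1, h1; split; [exists t | rewrite ex'; split].
apply: conn2_trans (conn2_sym c2) _.
exact: chain.
Qed.

Theorem proposition7 (d k : nat) (hd : (1 <= d)%N) (hk : (1 <= k)%N)
  (H : word d -> Prop) (hH : is_subgroup k H) :
  link_connected k H.
Proof.
case: hH => _ [H0 _].
move=> [J g0] /= rg0 hJ v w lv lw.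
have [p0 [p0J _]] := other ord0 hJ.
have [c1 _] := to_base hk H0 rg0 p0J hJ lv.
have [_ c2] := to_base hk H0 rg0 p0J hJ lw.
exact: rt_trans c1 c2.
Qed.
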